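(* There is a function $s$ with $s(p)=2^{\mathcal{O}(p^3)}$ such that for every graph $G$ of vertex integrity $p$ and every set $\mathcal{B}$ of balls of $G$, the positive non-clashing teaching dimension of $\mathcal{B}$ is at most $s(p)$.
   Context: For a graph $G$, $r\ge 0$ and $v\in V(G)$, the ball $B_r(v)$ is the set of vertices at distance at most $r$ from $v$. For a set $\mathcal{B}$ of balls of $G$, a positive teaching map $T$ assigns to each $B\in\mathcal{B}$ a set $T(B)\subseteq B$; its dimension is $\max_{B\in\mathcal{B}}|T(B)|$; $T$ is non-clashing if for every pair of distinct $B_1,B_2\in\mathcal{B}$ there is $w\in T(B_1)\cup T(B_2)$ with $w\notin B_1\cap B_2$. The positive non-clashing teaching dimension of $\mathcal{B}$ is the minimum dimension of a positive non-clashing teaching map for $\mathcal{B}$. The vertex integrity of $G$ is the minimum $b$ such that there is $X\subset V(G)$ with $|V(H)\cup X|\le b$ for every connected component $H$ of $G-X$. *)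

(* Defs.v *)
From mathcomp Require Import all_boot.
Set Implicit Arguments. Unset Strict Implicit. Unset Printing Implicit Defensive.

Section Graphs.
Variable T : finType.

Definition simple_graph (e : rel T) : Prop := symmetric e /\ irreflexive e.

Fixpoint ball (e : rel T) (r : nat) (v : T) : {set T} :=
  match r with
  | 0 => [set v]
  | r'.+1 => ball e r' v :|: [set w | [exists u in ball e r' v, e u w]]
  end.

Definition is_ball (e : rel T) (B : {set T}) : Prop :=
  exists (r : nat) (v : T), B = ball e r v.

(* Connected component of v in G - X (meaningful for v \notin X). *)
Definition comp_minus (e : rel T) (X : {set T}) (v : T) : {set T} :=
  [set w | connect [rel x y | [&& e x y, x \notin X & y \notin X]] v w].

(* b is an admissible bound: some X with |V(H) u X| <= b for every component H
   of G - X (and |X| <= b, covering the case where G - X is empty). *)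
Definition vi_bound (e : rel T) (b : nat) : Prop :=
  exists X : {set T}, #|X| <= b /\
    forall v, v \notin X -> #|comp_minus e X v :|: X| <= b.

Definition vertex_integrity_eq (e : rel T) (p : nat) : Prop :=
  vi_bound e p /\ forall b, b < p -> ~ vi_bound e b.

Definition positive_map (Bs : {set {set T}}) (Tm : {set T} -> {set T}) : Prop :=
  forall B, B \in Bs -> Tm B \subset B.

Definition non_clashing (Bs : {set {set T}}) (Tm : {set T} -> {set T}) : Prop :=
  forall B1 B2, B1 \in Bs -> B2 \in Bs -> B1 != B2 ->
    exists2 w, w \in Tm B1 :|: Tm B2 & w \notin B1 :&: B2.

Definition map_dim_le (Bs : {set {set T}}) (Tm : {set T} -> {set T}) (k : nat) : Prop :=
  forall B, B \in Bs -> #|Tm B| <= k.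

(* The positive non-clashing teaching dimension of Bs is at most k
   (the minimum over maps of the dimension is <= k iff some map has dimension <= k). *)
Definition pnctd_le (Bs : {set {set T}}) (k : nat) : Prop :=
  exists Tm : {set T} -> {set T},
    [/\ positive_map Bs Tm, non_clashing Bs Tm & map_dim_le Bs Tm k].

End Graphs.

(* Main.v *)
Require Import Defs.
From mathcomp Require Import all_boot.
Set Implicit Arguments. Unset Strict Implicit. Unset Printing Implicit Defensive.

Section Balls.
Variable T : finType.

Lemma ball_mono (f : rel T) v r r' : r <= r' -> ball f r v \subset ball f r' v.
Proof.
move=> h; rewrite -(subnK h); elim: (r' - r) => [|k IH] //=.
by apply: subset_trans IH (subsetUl _ _).
Qed.

Lemma ball_step (f : rel T) r v y w :
  y \in ball f r v -> f y w -> w \in ball f r.+1 v.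
Proof.
move=> hy hf /=; rewrite in_setU; apply/orP; right; rewrite inE.
by apply/existsP; exists y; rewrite hy hf.
Qed.

Lemma ball_tri (f : rel T) a b v x w :
  x \in ball f a v -> w \in ball f b x -> w \in ball f (a + b) v.
Proof.
move=> hx; elim: b w => [|b IH] w /=.
  by rewrite addn0 inE => /eqP ->.
rewrite addnS in_setU => /orP [h|].
  by apply: (subsetP (ball_mono f v (leqnSn _))); exact: IH.
rewrite inE => /existsP [y /andP [hy hyw]].
exact: ball_step (IH _ hy) hyw.
Qed.

Lemma path_ball (f : rel T) v s : path f v s -> last v s \in ball f (size s) v.
Proof.
elim: s v => [|y s IH] v /=; first by rewrite inE.
move=> /andP [hvy hp].
have hy : y \in ball f 1 v by apply: (ball_step (y := v)) => //; rewrite /= inE.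
by have := ball_tri hy (IH y hp); rewrite add1n.
Qed.

Lemma ball_path (f : rel T) r v w :
  w \in ball f r v -> exists2 s, path f v s & (last v s = w /\ size s <= r).
Proof.
elim: r w => [|r IH] w /=.
  by rewrite inE => /eqP ->; exists [::].
rewrite in_setU => /orP [/IH [s hp [hl hs]]|].
  by exists s => //; split => //; apply: leqW.
rewrite inE => /existsP [y /andP [/IH [s hp [hl hs]] hyw]].
exists (rcons s w); first by rewrite rcons_path hp hl hyw.
by rewrite last_rcons size_rcons.
Qed.

Lemma ball_rel_sub (f g : rel T) r v :
  subrel f g -> ball f r v \subset ball g r v.
Proof.
move=> hfg; apply/subsetP => w /ball_path [s hp [<- hs]].
apply: (subsetP (ball_mono g v hs)).
exact: path_ball (sub_path hfg hp).
Qed.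

Lemma cardU_le (A B : {set T}) : #|A :|: B| <= #|A| + #|B|.
Proof. by rewrite cardsU leq_subr. Qed.

Lemma card_bigcup_le (I : finType) (A : {set I}) (F : I -> {set T}) :
  #|\bigcup_(i in A) F i| <= \sum_(i in A) #|F i|.
Proof.
elim/big_rec2: _ => [|i S n _ IH]; first by rewrite cards0.
exact: leq_trans (cardU_le _ _) (leq_add (leqnn _) IH).
Qed.

Lemma pick_some (P : pred T) w : P w -> exists2 a, pick P = Some a & P a.
Proof. by case: pickP => [a ha|h0] hw; [exists a | rewrite h0 in hw]. Qed.

End Balls.

Section VI.
Variables (T : finType) (e : rel T) (X : {set T}) (p : nat).

Definition eX : rel T := [rel x y | [&& e x y, x \notin X & y \notin X]].
Local Notation comp := (comp_minus e X).

Lemma compE v w : (w \in comp v) = connect eX v w.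
Proof. by rewrite inE. Qed.

Lemma comp_refl v : v \in comp v.
Proof. by rewrite compE connect0. Qed.

Lemma comp_same (sym_e : symmetric e) v y z :
  y \in comp v -> z \in comp v -> z \in comp y.
Proof.
have eXs : symmetric eX.
  move=> x y0; rewrite /eX /= sym_e.
  by case: (x \in X); case: (y0 \in X); rewrite /= ?andbF.
have eXc := sym_connect_sym eXs.
rewrite !compE => hy hz; rewrite eXc in hy; exact: connect_trans hy hz.
Qed.

Lemma comp_X v w : v \in X -> w \in comp v -> w = v.
Proof.
rewrite compE => hv /connectP [[|y s]] /=; first by move=> _ ->.
by rewrite /eX /= hv /= andbF.
Qed.

Lemma dec r v w : w \in ball e r v -> w \notin X ->
  w \in comp v \/ exists x a u k, [/\ x \in X, x \in ball e a v, e x u, u \notin X &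
                                     (w \in ball eX k u /\ a + k < r)].
Proof.
elim: r w => [|r IH] w /=.
  by rewrite inE => /eqP -> _; left; exact: comp_refl.
rewrite in_setU => /orP [hw hwX|].
  case: (IH w hw hwX) => [h|[x [a [u [k [h1 h2 h3 h4 [h5 h6]]]]]]]; first by left.
  by right; exists x, a, u, k; split => //; split => //; rewrite ltnS ltnW.
rewrite inE => /existsP [y /andP [hy hyw]] hwX.
case hyX: (y \in X).
  right; exists y, r, w, 0; split => //; split; last by rewrite addn0.
  by rewrite /= inE.
case: (IH y hy (negbT hyX)) => [h | [x [a [u [k [h1 h2 h3 h4 [h5 h6]]]]]]].
  left; rewrite !compE in h *; apply: connect_trans h (connect1 _).
  by rewrite /eX /= hyw hyX hwX.
right; exists x, a, u, k.+1; split => //; split; last by rewrite addnS ltnS.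
by apply: ball_step h5 _; rewrite /eX /= hyw hyX hwX.
Qed.

Lemma short u w k : w \in ball eX k u ->
  exists2 k', k' <= k & (w \in ball eX k' u /\ k'.+1 <= #|comp u|).
Proof.
move=> /ball_path [s hp [<- hs]].
case: (shortenP hp) => s' hp' hu hsub.
exists (size s').
  have /andP [_ hu'] := hu; exact: leq_trans (uniq_leq_size hu' hsub) hs.
split; first exact: path_ball.
have <- : size (u :: s') = (size s').+1 by [].
rewrite -(card_uniqP hu); apply: subset_leq_card; apply/subsetP => y hy.
by rewrite compE; exact: path_connect hp' _ hy.
Qed.

Hypothesis hX : forall v, v \notin X -> #|comp v :|: X| <= p.

Lemma reach r v w : w \in ball e r v -> w \notin X -> w \notin comp v ->
  exists x b, [/\ x \in X, b <= p, w \in ball e b x &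
                  forall y, y \in ball e b x -> y \in ball e r v].
Proof.
move=> hw hwX hwc.
case: (dec hw hwX) => [h|[x [a [u [k [hx hxa hxu huX [hk hak]]]]]]].
  by rewrite h in hwc.
have [k' hk'k [hk' hkc]] := short hk.
exists x, k'.+1; split => //.
- exact: leq_trans hkc (leq_trans (subset_leq_card (subsetUl _ X)) (hX huX)).
- have hsub : subrel eX e by move=> x0 y0 /and3P [].
  have hw' := subsetP (ball_rel_sub k' u hsub) _ hk'.
  have hu : u \in ball e 1 x by apply: (ball_step (y := x)) => //; rewrite /= inE.
  by have := ball_tri hu hw'; rewrite add1n.
- move=> y hy; have := ball_tri hxa hy.
  apply: (subsetP (ball_mono _ _ _)).
  rewrite addnS; apply: leq_ltn_trans _ hak; by rewrite leq_add2l.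
Qed.

End VI.

Section Reps.
Variables (T : finType) (e : rel T) (X : {set T}) (p : nat).
Local Notation comp := (comp_minus e X).

Definition prof (w : T) : {set T * 'I_p.+1} :=
  [set xk : T * 'I_p.+1 | (xk.1 \in X) && (w \in ball e xk.2 xk.1)].
Definition Kc (pi : {set T * 'I_p.+1}) : {set T} :=
  [set w | (w \notin X) && (prof w == pi)].
Definition oc (o : option T) : {set T} := if o is Some r then comp r else set0.
Definition rep1 pi := pick (fun w => w \in Kc pi).
Definition rep2 pi := pick (fun w => (w \in Kc pi) && (w \notin oc (rep1 pi))).
Definition rep3 pi := pick (fun w => [&& w \in Kc pi, w \notin oc (rep1 pi)
                                       & w \notin oc (rep2 pi)]).
Definition Sx : {set T * 'I_p.+1} := setX X [set: 'I_p.+1].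
Definition Rset : {set T} :=
  \bigcup_(pi in powerset Sx) (oc (rep1 pi) :|: oc (rep2 pi) :|: oc (rep3 pi)).

Lemma prof_eq w w' x b : prof w = prof w' -> x \in X -> b <= p ->
  w \in ball e b x -> w' \in ball e b x.
Proof.
move=> E hx hb h.
have : (x, inord b : 'I_p.+1) \in prof w by rewrite inE /= hx inordK.
by rewrite E inE /= inordK // => /andP [_].
Qed.

Lemma reps pi w : w \in Kc pi -> w \notin oc (rep1 pi) -> w \notin oc (rep2 pi) ->
  w \notin oc (rep3 pi) ->
  exists a b c, [/\ [/\ a \in Kc pi, b \in Kc pi & c \in Kc pi],
     [/\ a \in oc (rep1 pi), b \in oc (rep2 pi) & c \in oc (rep3 pi)] &
     [/\ b \notin comp a, c \notin comp a & c \notin comp b]].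
Proof.
move=> hK h1 h2 h3.
have [a E1 ha] := pick_some (P := fun w => w \in Kc pi) hK.
have hw2 : (w \in Kc pi) && (w \notin oc (rep1 pi)) by rewrite hK h1.
have [b E2 /andP [hb hb1]] :=
  pick_some (P := fun w => (w \in Kc pi) && (w \notin oc (rep1 pi))) hw2.
have hw3 : [&& w \in Kc pi, w \notin oc (rep1 pi) & w \notin oc (rep2 pi)]
  by rewrite hK h1 h2.
have [c E3 /and3P [hc hc1 hc2]] :=
  pick_some (P := fun w => [&& w \in Kc pi, w \notin oc (rep1 pi)
                                       & w \notin oc (rep2 pi)]) hw3.
have E1' : rep1 pi = Some a := E1.
have E2' : rep2 pi = Some b := E2.
have E3' : rep3 pi = Some c := E3.
rewrite E1' /= in hb1 hc1; rewrite E2' /= in hc2.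
exists a, b, c; split => //; split; rewrite ?E1' ?E2' ?E3' /=; exact: comp_refl.
Qed.

Lemma pig (sym_e : symmetric e) a b c v1 v2 :
  b \notin comp a -> c \notin comp a -> c \notin comp b ->
  exists2 w', w' \in [:: a; b; c] & (w' \notin comp v1) && (w' \notin comp v2).
Proof.
move=> hab hac hbc.
have two : forall y z v, z \notin comp y -> ~~ ((y \in comp v) && (z \in comp v)).
  move=> y z v hyz; apply/negP => /andP [hy hz].
  move/negP: hyz; apply. exact: (@comp_same T e X sym_e v y z hy hz).
suff : [|| (a \notin comp v1) && (a \notin comp v2),
           (b \notin comp v1) && (b \notin comp v2) |
           (c \notin comp v1) && (c \notin comp v2)].
  case/or3P => h; [exists a | exists b | exists c] => //;
    by rewrite !inE eqxx ?orbT.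
move: (two _ _ v1 hab) (two _ _ v1 hac) (two _ _ v1 hbc)
      (two _ _ v2 hab) (two _ _ v2 hac) (two _ _ v2 hbc).
by case: (a \in comp v1); case: (b \in comp v1); case: (c \in comp v1);
   case: (a \in comp v2); case: (b \in comp v2); case: (c \in comp v2).
Qed.

Hypothesis sym_e : symmetric e.
Hypothesis hX : forall v, v \notin X -> #|comp v :|: X| <= p.

Lemma mainL B1 B2 v1 r1 v2 r2 : B1 = ball e r1 v1 -> B2 = ball e r2 v2 ->
  B1 :&: (X :|: comp v1 :|: Rset) \subset B2 -> B1 \subset B2.
Proof.
move=> E1 E2 hT; apply/subsetP => w hw.
have hT' : forall y, y \in B1 -> y \in X :|: comp v1 :|: Rset -> y \in B2.
  by move=> y ha hb; apply: (subsetP hT); rewrite in_setI ha hb.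
case hwR: (w \in X :|: comp v1 :|: Rset); first exact: hT' hw hwR.
move: hwR; rewrite !in_setU => /norP [/norP [hwX hwc] hwR].
set pi := prof w.
have hpi : pi \in powerset Sx.
  rewrite powersetE; apply/subsetP => [[x k]]; rewrite inE /= => /andP [hx _].
  by rewrite /Sx in_setX hx in_setT.
have hwK : w \in Kc pi by rewrite inE hwX eqxx.
have hF : oc (rep1 pi) :|: oc (rep2 pi) :|: oc (rep3 pi) \subset Rset.
  exact: (bigcup_sup _ hpi).
have nin : forall y, y \in oc (rep1 pi) :|: oc (rep2 pi) :|: oc (rep3 pi) -> y \in Rset.
  by move=> y; apply: (subsetP hF).
have n1 : w \notin oc (rep1 pi).
  by apply/negP => h; move/negP: hwR; apply; apply: nin; rewrite !in_setU h.
have n2 : w \notin oc (rep2 pi).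
  by apply/negP => h; move/negP: hwR; apply; apply: nin; rewrite !in_setU h orbT.
have n3 : w \notin oc (rep3 pi).
  by apply/negP => h; move/negP: hwR; apply; apply: nin; rewrite !in_setU h orbT.
have [a [b [c [[ha hb hc] [ha' hb' hc'] [hab hac hbc]]]]] := reps hwK n1 n2 n3.
have [w' hw'l /andP [hw'1 hw'2]] := pig sym_e v1 v2 hab hac hbc.
have [hw'K hw'R] : w' \in Kc pi /\ w' \in Rset.
  move: hw'l; rewrite !in_cons in_nil orbF => /or3P [] /eqP ->; split => //;
    by apply: nin; rewrite !in_setU ?ha' ?hb' ?hc' ?orbT.
move: hw'K; rewrite inE => /andP [hw'X /eqP hprof].
rewrite E1 in hw; rewrite E2.
have [x [k [hx hk hwk himp]]] := reach hX hw hwX hwc.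
have hw'B1 : w' \in B1 by rewrite E1; apply: himp; exact: prof_eq hx hk hwk.
have := hT' w' hw'B1; rewrite !in_setU hw'R orbT => /(_ isT).
rewrite E2 => hw'B2.
have [x' [k' [hx' hk' hwk' himp']]] := reach hX hw'B2 hw'X hw'2.
by apply: himp'; apply: prof_eq hx' hk' hwk'.
Qed.

Hypothesis hXp : #|X| <= p.

Lemma Tsize B v : #|B :&: (X :|: comp v :|: Rset)| <= p + 2 ^ (p * p.+1) * (3 * p).
Proof.
apply: leq_trans (subset_leq_card (subsetIr _ _)) _.
apply: leq_trans (cardU_le _ _) _; apply: leq_add.
  case hv: (v \in X).
    apply: leq_trans hXp; apply: subset_leq_card; rewrite subUset subxx /=.
    by apply/subsetP => w /(comp_X hv) ->.
  by rewrite setUC; apply: hX; rewrite hv.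
apply: leq_trans (card_bigcup_le _ _) _.
have hoc : forall o : option T, (forall r, o = Some r -> r \notin X) -> #|oc o| <= p.
  move=> [r|] h /=; last by rewrite cards0.
  exact: leq_trans (subset_leq_card (subsetUl _ X)) (hX (h r erefl)).
have hpk : forall pi (P : pred T), (forall r, P r -> r \in Kc pi) ->
    #|oc (pick P)| <= p.
  move=> pi P hP; apply: hoc => r; case: pickP => [r' hr' [<-]|//].
  by have := hP _ hr'; rewrite inE => /andP [].
have hF : forall pi, #|oc (rep1 pi) :|: oc (rep2 pi) :|: oc (rep3 pi)| <= 3 * p.
  move=> pi; rewrite (_ : 3 * p = p + p + p); last first.
    by rewrite !mulSn mul0n addn0 addnA.
  apply: leq_trans (cardU_le _ _) (leq_add (leq_trans (cardU_le _ _) (leq_add _ _)) _).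
  - exact: (hpk pi (fun w => w \in Kc pi) (fun r h => h)).
  - apply: (hpk pi (fun w => (w \in Kc pi) && (w \notin oc (rep1 pi)))).
    by move=> r /andP [].
  - apply: (hpk pi (fun w => [&& w \in Kc pi, w \notin oc (rep1 pi) & w \notin oc (rep2 pi)])).
    by move=> r /and3P [].
apply: (@leq_trans (\sum_(pi in powerset Sx) 3 * p)).
  by apply: leq_sum => pi _; exact: hF.
rewrite sum_nat_const card_powerset /Sx cardsX cardsT card_ord.
apply: leq_mul => //; apply: leq_pexp2l => //; exact: leq_mul hXp (leqnn _).
Qed.

End Reps.
From mathcomp Require Import zify.

Lemma sbound p : 1 <= p -> p + 2 ^ (p * p.+1) * (3 * p) <= 2 ^ (6 * p ^ 3).
Proof.
move=> hp.
have h1 : p <= 2 ^ p := ltnW (ltn_expl p (isT : 1 < 2)).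
set A := p * p.+1.
have h2 : 3 * p <= 2 ^ p.+2 by rewrite !expnS mulnA; apply: leq_mul.
have h3 : 2 ^ A * (3 * p) <= 2 ^ (A + p.+2) by rewrite expnD; exact: leq_mul (leqnn _) h2.
have h4 : p <= 2 ^ (A + p.+2).
  apply: leq_trans h1 _; apply: leq_pexp2l => //.
  apply: leq_trans (leq_addl A p) _; rewrite leq_add2l; exact: leqW (leqnSn p).
apply: leq_trans (leq_add h4 h3) _; rewrite addnn -mul2n -expnS.
apply: leq_pexp2l => //.
have q1 : p * p <= p * (p * p) by rewrite -{1}(mul1n (p * p)) leq_mul2r hp orbT.
have q2 : p <= p * p by rewrite -{1}(mul1n p) leq_mul2r hp orbT.
rewrite /A mulnS !expnS expn0 muln1.
move: q1 q2 hp; move: (p * p) (p * (p * p)) => r q.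
lia.
Qed.

Theorem corollary10 :
  exists s : nat -> nat,
    (exists C N : nat, forall p, N <= p -> s p <= 2 ^ (C * p ^ 3)) /\
    forall (T : finType) (e : rel T) (p : nat) (Bs : {set {set T}}),
      simple_graph e ->
      vertex_integrity_eq e p ->
      (forall B, B \in Bs -> is_ball e B) ->
      pnctd_le Bs (s p).
Proof.
exists (fun p => p + 2 ^ (p * p.+1) * (3 * p)); split.
  by exists 6, 1 => p hp; exact: sbound.
move=> T e p Bs [sym_e _] [[X [hXp hX]] _] hB.
case: (set_0Vmem Bs) => [-> | [B0 hB0]].
  exists (fun _ => set0); split => B; rewrite inE //.
have [r0 [v0 _]] := hB B0 hB0.
have [c hc] : exists c : {set T} -> (T * nat)%type,
    forall B, B \in Bs -> B = ball e (c B).2 (c B).1.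
  apply: (@fin_all_exists _ (fun _ => (T * nat)%type)
     (fun B (cv : T * nat) => B \in Bs -> B = ball e cv.2 cv.1)) => B.
  case: (boolP (B \in Bs)) => h; last by exists (v0, r0).
  by have [r [v E]] := hB B h; exists (v, r).
exists (fun B => B :&: (X :|: comp_minus e X (c B).1 :|: Rset e X p)); split.
- by move=> B _; exact: subsetIl.
- move=> B1 B2 h1 h2 hne.
  case: (boolP [exists w, (w \in (B1 :&: (X :|: comp_minus e X (c B1).1 :|: Rset e X p))
       :|: (B2 :&: (X :|: comp_minus e X (c B2).1 :|: Rset e X p)))
       && (w \notin B1 :&: B2)]).
    by move/existsP => [w /andP [hw hw']]; exists w.
  move/existsPn => H.
  have s12 : B1 \subset B2.
    apply: (mainL sym_e hX (hc B1 h1) (hc B2 h2)); apply/subsetP => w hw.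
    move: (H w); rewrite in_setU hw /= negbK in_setI => /andP [_ ->] //.
  have s21 : B2 \subset B1.
    apply: (mainL sym_e hX (hc B2 h2) (hc B1 h1)); apply/subsetP => w hw.
    move: (H w); rewrite in_setU hw orbT /= negbK in_setI => /andP [-> _] //.
  by move/eqP: hne; case; apply/eqP; rewrite eqEsubset s12 s21.
- by move=> B _; exact: Tsize.
Qed.
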